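(* Let $\mathcal{V}$ be a quaternionic two-sided Banach algebra with unit and let $v\in\mathcal{V}$. Then $$\partial\sigma_{S}(v)\subseteq B_{S,\partial}(v)\subseteq \sigma_{S}(v).$$
   Context: $\mathbb{H}$ denotes the quaternions, $Re(q)$ the real part and $|q|$ the norm of $q$. A quaternionic two-sided Banach algebra with unit is a two-sided $\mathbb{H}$-vector space $\mathcal{V}$ with an associative product satisfying $x(y+z)=xy+xz$, $(x+y)z=xz+yz$, $q(xy)=(qx)y$, $(xy)q=x(yq)$, complete for a norm with $\|qx\|=|q|\|x\|=\|xq\|$, $\|xy\|\le\|x\|\|y\|$, with unit $1_{\mathcal{V}}\ne0$, $\|1_{\mathcal{V}}\|=1$. $\mathcal{V}^{-1}$ is the set of invertible elements. $R_q(v)=v^2-2Re(q)v+|q|^21_{\mathcal{V}}$. S-spectrum: $\sigma_S(v)=\{q\in\mathbb{H}:R_q(v)\notin\mathcal{V}^{-1}\}$, with boundary $\partial\sigma_S(v)$ in $\mathbb{H}$. Boundary S-spectrum: $B_{S,\partial}(v)=\{q\in\mathbb{H}: R_q(v)\in\partial(\mathcal{V}\setminus\mathcal{V}^{-1})\}$, where $\partial(\mathcal{V}\setminus\mathcal{V}^{-1})$ is the topological boundary in $\mathcal{V}$. *)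

(* Defs.v *)
From mathcomp Require Import all_boot all_order all_algebra.
From mathcomp Require Import reals.
Set Implicit Arguments. Unset Strict Implicit. Unset Printing Implicit Defensive.
Import Order.TTheory GRing.Theory Num.Theory.
Local Open Scope ring_scope.

Record quat (R : Type) := Quat { qre : R; qi : R; qj : R; qk : R }.

Section Quat.
Variable R : realType.
Definition qadd (p q : quat R) : quat R :=
  Quat (qre p + qre q) (qi p + qi q) (qj p + qj q) (qk p + qk q).
Definition qopp (p : quat R) : quat R :=
  Quat (- qre p) (- qi p) (- qj p) (- qk p).
Definition qsub (p q : quat R) : quat R := qadd p (qopp q).
Definition qmul (p q : quat R) : quat R :=
  Quat (qre p * qre q - qi p * qi q - qj p * qj q - qk p * qk q)
       (qre p * qi q + qi p * qre q + qj p * qk q - qk p * qj q)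
       (qre p * qj q - qi p * qk q + qj p * qre q + qk p * qi q)
       (qre p * qk q + qi p * qj q - qj p * qi q + qk p * qre q).
Definition qreal (r : R) : quat R := Quat r 0 0 0.
Definition qone : quat R := qreal 1.
Definition Req (q : quat R) : R := qre q.
Definition qnorm (q : quat R) : R :=
  Num.sqrt (qre q ^+ 2 + qi q ^+ 2 + qj q ^+ 2 + qk q ^+ 2).
End Quat.

Record QBA (R : realType) := {
  carrier :> Type;
  vadd : carrier -> carrier -> carrier;
  vzero : carrier;
  vopp : carrier -> carrier;
  lsc : quat R -> carrier -> carrier;
  rsc : carrier -> quat R -> carrier;
  vmul : carrier -> carrier -> carrier;
  vone : carrier;
  vnorm : carrier -> R;
  vaddA : forall x y z, vadd x (vadd y z) = vadd (vadd x y) z;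
  vaddC : forall x y, vadd x y = vadd y x;
  vadd0 : forall x, vadd vzero x = x;
  vaddN : forall x, vadd x (vopp x) = vzero;
  lscDr : forall q x y, lsc q (vadd x y) = vadd (lsc q x) (lsc q y);
  lscDl : forall p q x, lsc (qadd p q) x = vadd (lsc p x) (lsc q x);
  lscA : forall p q x, lsc (qmul p q) x = lsc p (lsc q x);
  lsc1 : forall x, lsc (qone R) x = x;
  rscDl : forall q x y, rsc (vadd x y) q = vadd (rsc x q) (rsc y q);
  rscDr : forall p q x, rsc x (qadd p q) = vadd (rsc x p) (rsc x q);
  rscA : forall p q x, rsc x (qmul p q) = rsc (rsc x p) q;
  rsc1 : forall x, rsc x (qone R) = x;
  lrsc : forall p q x, rsc (lsc p x) q = lsc p (rsc x q);
  vmulA : forall x y z, vmul x (vmul y z) = vmul (vmul x y) z;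
  vmulDr : forall x y z, vmul x (vadd y z) = vadd (vmul x y) (vmul x z);
  vmulDl : forall x y z, vmul (vadd x y) z = vadd (vmul x z) (vmul y z);
  lsc_mul : forall q x y, lsc q (vmul x y) = vmul (lsc q x) y;
  rsc_mul : forall q x y, rsc (vmul x y) q = vmul x (rsc y q);
  vmul1l : forall x, vmul vone x = x;
  vmul1r : forall x, vmul x vone = x;
  vone_neq0 : vone <> vzero;
  vnorm_ge0 : forall x, 0 <= vnorm x;
  vnorm_eq0 : forall x, vnorm x = 0 -> x = vzero;
  vnorm_triangle : forall x y, vnorm (vadd x y) <= vnorm x + vnorm y;
  vnorm_lsc : forall q x, vnorm (lsc q x) = qnorm q * vnorm x;
  vnorm_rsc : forall q x, vnorm (rsc x q) = qnorm q * vnorm x;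
  vnorm_mul : forall x y, vnorm (vmul x y) <= vnorm x * vnorm y;
  vnorm_one : vnorm vone = 1;
  vcomplete : forall u : nat -> carrier,
    (forall e : R, 0 < e -> exists N : nat, forall m n : nat, (N <= m)%N -> (N <= n)%N ->
        vnorm (vadd (u m) (vopp (u n))) < e) ->
    exists l : carrier, forall e : R, 0 < e -> exists N : nat, forall n : nat, (N <= n)%N ->
        vnorm (vadd (u n) (vopp l)) < e
}.

Section Spectra.
Variables (R : realType) (V : QBA R).

Definition vsub (x y : V) : V := vadd x (vopp y).

Definition vinvertible (x : V) : Prop :=
  exists y : V, vmul x y = vone V /\ vmul y x = vone V.

Definition Rq (v : V) (q : quat R) : V :=
  vadd (vsub (vmul v v) (lsc (qreal (2 * Req q)) v))
       (lsc (qreal (qnorm q ^+ 2)) (vone V)).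

Definition sigmaS (v : V) (q : quat R) : Prop := ~ vinvertible (Rq v q).

Definition boundaryH (S : quat R -> Prop) (q : quat R) : Prop :=
  forall e : R, 0 < e ->
    (exists p, qnorm (qsub p q) < e /\ S p) /\
    (exists p, qnorm (qsub p q) < e /\ ~ S p).

Definition boundaryV (A : V -> Prop) (x : V) : Prop :=
  forall e : R, 0 < e ->
    (exists y, vnorm (vsub y x) < e /\ A y) /\
    (exists y, vnorm (vsub y x) < e /\ ~ A y).

Definition BSd (v : V) (q : quat R) : Prop :=
  boundaryV (fun x => ~ vinvertible x) (Rq v q).
End Spectra.

(* Main.v *)
Require Import Defs.
From HB Require Import structures.
From mathcomp Require Import all_boot all_order all_algebra.
From mathcomp Require Import boolp reals.
From mathcomp Require Import ring lra.
From Stdlib Require Import Classical.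
Set Implicit Arguments. Unset Strict Implicit. Unset Printing Implicit Defensive.
Import Order.TTheory GRing.Theory Num.Theory.

Local Open Scope ring_scope.
Lemma bern (R : realType) (h : R) n : 0 <= h -> 1 + n%:R * h <= (1 + h) ^+ n.
Proof.
move=> h0; elim: n => [|n IH]; first by rewrite mul0r addr0 expr0.
rewrite exprS -natr1.
have : 0 <= n%:R :> R by apply: ler0n.
nra.
Qed.
Lemma geo_small (R : realType) (r e : R) : 0 <= r -> r < 1 -> 0 < e -> exists N, r ^+ N < e.
Proof.
move=> r0 r1 e0; have [->|rn0] := eqVneq r 0; first by exists 1%N; rewrite expr1.
have rp : 0 < r by rewrite lt0r rn0.
set h := (1 - r) / r.
have hr : r * (1 + h) = 1 by rewrite /h mulrDr mulr1 mulrCA divff // mulr1; lra.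
have h0 : 0 < h by rewrite /h divr_gt0 // subr_gt0.
have ehp : 0 <= (e * h)^-1 by rewrite invr_ge0 ltW // mulr_gt0.
have := archi_boundP ehp; set N := Num.Def.archi_bound _ => HN.
exists N.
have B := @bern R h N (ltW h0).
have E : r ^+ N * (1 + h) ^+ N = 1 by rewrite -exprMn_comm ?hr ?expr1n //; exact: mulrC.
have Ne : 1 < N%:R * (e * h).
  by rewrite -(ltr_pdivrMr _ _ (mulr_gt0 e0 h0)) div1r.
have t0 : 0 < r ^+ N by apply: exprn_gt0.
move: E B Ne t0; set T := (1 + h) ^+ N; set t := r ^+ N; set n := (N%:R : R) => E B Ne t0.
have Te : 1 < T * e by nra.
have -> : e = t * (T * e) by rewrite mulrA E mul1r.
nra.
Qed.

Section S.
Variables (R : realType) (V : QBA R).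
Local Open Scope ring_scope.
Definition VT : Type := carrier V.
HB.instance Definition _ := gen_eqMixin VT.
HB.instance Definition _ := gen_choiceMixin VT.
Lemma vaddNl (x : VT) : vadd (vopp x) x = vzero V.
Proof. by rewrite vaddC vaddN. Qed.
HB.instance Definition _ := GRing.isZmodule.Build VT (@vaddA R V) (@vaddC R V) (@vadd0 R V) vaddNl.
Lemma vone_neq0' : (vone V : VT) != 0.
Proof. by apply/eqP; exact: vone_neq0. Qed.
Lemma vmulDl' : left_distributive (@vmul R V : VT -> VT -> VT) +%R.
Proof. move=> x y z; exact: vmulDl. Qed.
Lemma vmulDr' : right_distributive (@vmul R V : VT -> VT -> VT) +%R.
Proof. move=> x y z; exact: vmulDr. Qed.
HB.instance Definition _ := GRing.Zmodule_isNzRing.Build VT (@vmulA R V) (@vmul1l R V) (@vmul1r R V) vmulDl' vmulDr' vone_neq0'.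

Definition nv (x : VT) : R := vnorm x.

Lemma qreal_add (r s : R) : qadd (qreal r) (qreal s) = qreal (r + s).
Proof. by rewrite /qadd /qreal /= addr0. Qed.

Definition L (r : R) (x : VT) : VT := lsc (qreal r) x.
Lemma LD r s x : L (r + s) x = L r x + L s x.
Proof. by rewrite /L -qreal_add lscDl. Qed.
Lemma L0 x : L 0 x = 0.
Proof. have h := LD 0 0 x; rewrite addr0 in h. by apply: (addrI (L 0 x)); rewrite addr0 -h. Qed.
Lemma LB r s x : L r x - L s x = L (r - s) x.
Proof. by rewrite -{1}(subrK s r) [L (r - s + s) x]LD addrK. Qed.
Lemma Lm1 x : L (-1) x = - x.
Proof. apply/eqP; rewrite -addr_eq0. have h : x = L 1 x by rewrite /L lsc1.
  by rewrite {2}h -LD addNr L0. Qed.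
Lemma qnorm_real (r : R) : qnorm (qreal r) = `|r|.
Proof. by rewrite /qnorm /qreal /= expr0n /= !addr0 sqrtr_sqr. Qed.
Lemma nvL r x : nv (L r x) = `|r| * nv x.
Proof. by rewrite /nv /L vnorm_lsc qnorm_real. Qed.
Lemma nv0 : nv 0 = 0.
Proof. by rewrite -(L0 0) nvL normr0 mul0r. Qed.
Lemma nvN x : nv (- x) = nv x.
Proof. by rewrite -Lm1 nvL normrN normr1 mul1r. Qed.
Lemma nvD x y : nv (x + y) <= nv x + nv y.
Proof. exact: vnorm_triangle. Qed.
Lemma nvM x y : nv (x * y) <= nv x * nv y.
Proof. exact: vnorm_mul. Qed.
Lemma nv1 : nv 1 = 1.
Proof. exact: vnorm_one. Qed.
Lemma nv_ge0 x : 0 <= nv x.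
Proof. exact: vnorm_ge0. Qed.
Lemma nvBC x y : nv (x - y) = nv (y - x).
Proof. by rewrite -nvN opprB. Qed.
Lemma nv_small x : (forall e, 0 < e -> nv x < e) -> x = 0.
Proof.
move=> H; apply: vnorm_eq0; apply/eqP; rewrite eq_le nv_ge0 andbT.
rewrite leNgt; apply/negP => Hp; have := H _ Hp; by rewrite ltxx.
Qed.

Definition Ssum (a : VT) n := \sum_(i < n) a ^+ i.
Lemma SB a n : (1 - a) * Ssum a n = 1 - a ^+ n.
Proof. by rewrite -opprB mulNr /Ssum -subrX1 opprB. Qed.
Lemma SBr a n : Ssum a n * (1 - a) = 1 - a ^+ n.
Proof.
have c : GRing.comm (1 - a) (Ssum a n).
  apply: commr_sum => i _; apply: commrX.
  by rewrite /GRing.comm mulrBl mulrBr mul1r mulr1.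
by rewrite -c SB.
Qed.
Lemma nv_pow a n : nv (a ^+ n) <= nv a ^+ n.
Proof.
elim: n => [|n IH]; first by rewrite !expr0 nv1.
rewrite !exprS; apply: (le_trans (nvM _ _)); apply: ler_wpM2l; first exact: nv_ge0.
exact: IH.
Qed.
Lemma S_cauchy a n k : nv a <= 1 -> nv (Ssum a (n + k) - Ssum a n) * (1 - nv a) <= nv a ^+ n - nv a ^+ (n + k).
Proof.
move=> r1; elim: k => [|k IH]; first by rewrite addn0 subrr nv0 mul0r subrr.
rewrite addnS /Ssum big_ord_recr /= -/(Ssum a (n + k)) addrAC.
have H1 := nvD (Ssum a (n + k) - Ssum a n) (a ^+ (n + k)).
have H2 := nv_pow a (n + k).
have H3 := nv_ge0 a.
rewrite exprS.
set D := nv (_ - _) in IH H1 *; set D' := nv (_ + _) in H1 *.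
move: IH H1 H2 H3; set t := nv a ^+ (n + k); set r := nv a => IH H1 H2 H3.
have r1' : r <= 1 := r1.
have h4 : D' * (1 - r) <= (D + t) * (1 - r) by apply: ler_wpM2r; lra.
nra.
Qed.

Lemma neumann a : nv a < 1 -> exists w : VT, (1 - a) * w = 1 /\ w * (1 - a) = 1.
Proof.
move=> ha; set r := nv a in ha.
have r0 : 0 <= r := nv_ge0 a.
have tail : forall N m, (N <= m)%N -> nv (Ssum a m - Ssum a N) * (1 - r) <= r ^+ N.
  move=> N m Hm; have := @S_cauchy a N (m - N) (ltW ha); rewrite subnKC //.
  have : 0 <= r ^+ m by apply: exprn_ge0.
  rewrite -/r; lra.
have cauchy : forall e : R, 0 < e -> exists N : nat, forall m n : nat, (N <= m)%N -> (N <= n)%N ->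
        vnorm (vadd (Ssum a m) (vopp (Ssum a n))) < e.
  move=> e e0.
  have e1 : 0 < e * (1 - r) / 2 by apply: divr_gt0 => //; apply: mulr_gt0 => //; lra.
  have [N HN] := geo_small r0 ha e1.
  exists N => m n Hm Hn.
  have A1 := tail N m Hm; have A2 := tail N n Hn.
  have A3 : nv (Ssum a m - Ssum a n) <= nv (Ssum a m - Ssum a N) + nv (Ssum a n - Ssum a N).
    rewrite (nvBC (Ssum a n)) -[X in nv X <= _](subrKA (Ssum a N)); exact: nvD.
  change (nv (Ssum a m - Ssum a n) < e).
  move: A1 A2 A3; set X := nv _; set Y := nv _; set Z := nv _ => A1 A2 A3.
  have : Z * (1 - r) <= (X + Y) * (1 - r) by apply: ler_wpM2r; lra.
  have : 0 < 1 - r by lra.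
  nra.
have [l0 Hl0] := @vcomplete R V (fun n : nat => Ssum a n) cauchy.
pose l : VT := l0.
have Hl : forall e : R, 0 < e -> exists N : nat, forall n : nat, (N <= n)%N -> nv (Ssum a n - l) < e := Hl0.
have approx : forall e : R, 0 < e -> exists n, nv (Ssum a n - l) < e / 4 /\ r ^+ n < e / 2.
  move=> e e0.
  have e4 : 0 < e / 4 by lra.
  have e2 : 0 < e / 2 by lra.
  have [N1 H1] := Hl (e / 4) e4.
  have [N2 H2] := geo_small r0 ha e2.
  exists (maxn N1 N2); split; first exact: H1 (leq_maxl _ _).
  apply: le_lt_trans H2; apply: ler_wiXn2l => //; [exact: ltW | exact: leq_maxr].
have n1a : nv (1 - a) <= 2.
  have := nvD 1 (- a); rewrite nvN nv1 -/r; lra.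
exists l; split; apply/eqP; rewrite -subr_eq0; apply/eqP; apply: nv_small => e e0;
  have [n [A B]] := approx e e0.
- have -> : (1 - a) * l - 1 = (1 - a) * (l - Ssum a n) - a ^+ n.
    by rewrite mulrBr SB opprB addrA addrAC addrK.
  apply: le_lt_trans (nvD _ _) _; rewrite nvN.
  have := nvM (1 - a) (l - Ssum a n); have := nv_pow a n; rewrite [nv (l - Ssum a n)]nvBC.
  have := nv_ge0 (Ssum a n - l); have := nv_ge0 (1 - a).
  rewrite -/r; nra.
- have -> : l * (1 - a) - 1 = (l - Ssum a n) * (1 - a) - a ^+ n.
    by rewrite mulrBl SBr opprB addrA addrAC addrK.
  apply: le_lt_trans (nvD _ _) _; rewrite nvN.
  have := nvM (l - Ssum a n) (1 - a); have := nv_pow a n; rewrite [nv (l - Ssum a n)]nvBC.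
  have := nv_ge0 (Ssum a n - l); have := nv_ge0 (1 - a).
  rewrite -/r; nra.
Qed.

Lemma inv_open (x : VT) : vinvertible x -> exists d : R, 0 < d /\ forall z : VT, nv (z - x) < d -> vinvertible z.
Proof.
move=> [yy [xy yx]]; pose y : VT := yy.
have xy' : x * y = 1 := xy.
have yx' : y * x = 1 := yx.
have y0 : 0 < nv y.
  rewrite lt_neqAle nv_ge0 andbT; apply/eqP => /esym h.
  have y00 : y = 0 := @vnorm_eq0 R V y h.
  by move: xy'; rewrite y00 mulr0 => /esym/eqP; rewrite oner_eq0.
exists (nv y)^-1; split; first by rewrite invr_gt0.
move=> z Hz; set a := y * (x - z).
have ha : nv a < 1.
  apply: (le_lt_trans (nvM _ _)); rewrite nvBC.
  by rewrite -(ltr_pdivlMl _ _ y0) mulr1.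
have [w [h1 h2]] := neumann ha.
have zx : z = x * (1 - a) by rewrite mulrBr mulr1 /a mulrA xy' mul1r opprB subrKC.
exists (w * y); split.
- change (z * (w * y) = 1); by rewrite zx -mulrA (mulrA (1 - a)) h1 mul1r xy'.
- change ((w * y) * z = 1); by rewrite zx mulrA -(mulrA w) yx' mulr1 h2.
Qed.

Lemma Rq_diff (v : VT) p q : (Rq v p : VT) - (Rq v q : VT) =
   L (2 * Req q - 2 * Req p) v + L (qnorm p ^+ 2 - qnorm q ^+ 2) 1.
Proof.
change ((v * v - L (2 * Req p) v + L (qnorm p ^+ 2) 1) - (v * v - L (2 * Req q) v + L (qnorm q ^+ 2) 1) =
   L (2 * Req q - 2 * Req p) v + L (qnorm p ^+ 2 - qnorm q ^+ 2) 1).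
rewrite -!LB opprD opprB addrACA [X in X + _ = _]addrC subrKA //.
Qed.

Lemma sq4_ge0 (a b c d : R) : 0 <= a ^+ 2 + b ^+ 2 + c ^+ 2 + d ^+ 2.
Proof. by rewrite !addr_ge0 ?sqr_ge0. Qed.
Lemma comp_le (a b c d : R) : `|a| <= Num.sqrt (a ^+ 2 + b ^+ 2 + c ^+ 2 + d ^+ 2).
Proof.
rewrite -sqrtr_sqr; apply: ler_wsqrtr.
have := sqr_ge0 b; have := sqr_ge0 c; have := sqr_ge0 d; lra.
Qed.
Lemma qcomp (u : quat R) : [/\ `|qre u| <= qnorm u, `|qi u| <= qnorm u, `|qj u| <= qnorm u & `|qk u| <= qnorm u].
Proof.
rewrite /qnorm; split; first exact: comp_le.
- have -> : qre u ^+ 2 + qi u ^+ 2 + qj u ^+ 2 + qk u ^+ 2 = qi u ^+ 2 + qre u ^+ 2 + qj u ^+ 2 + qk u ^+ 2 by ring.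
  exact: comp_le.
- have -> : qre u ^+ 2 + qi u ^+ 2 + qj u ^+ 2 + qk u ^+ 2 = qj u ^+ 2 + qre u ^+ 2 + qi u ^+ 2 + qk u ^+ 2 by ring.
  exact: comp_le.
- have -> : qre u ^+ 2 + qi u ^+ 2 + qj u ^+ 2 + qk u ^+ 2 = qk u ^+ 2 + qre u ^+ 2 + qi u ^+ 2 + qj u ^+ 2 by ring.
  exact: comp_le.
Qed.
Lemma qnorm_sq (u : quat R) : qnorm u ^+ 2 = qre u ^+ 2 + qi u ^+ 2 + qj u ^+ 2 + qk u ^+ 2.
Proof. by rewrite /qnorm sqr_sqrtr // sq4_ge0. Qed.
Lemma qnorm_ge0 (u : quat R) : 0 <= qnorm u.
Proof. exact: sqrtr_ge0. Qed.
Lemma sqdiff (x y d Q : R) : `|x - y| <= d -> `|y| <= Q ->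
  - (d * (2 * Q + d)) <= x ^+ 2 - y ^+ 2 <= d * (2 * Q + d).
Proof.
rewrite !ler_norml => /andP[h1 h2] /andP[h3 h4].
have -> : x ^+ 2 - y ^+ 2 = (x - y) * (2 * y + (x - y)) by ring.
move: h1 h2; set w := x - y => h1 h2.
apply/andP; split; nra.
Qed.

Lemma Rq_cont (v : VT) (q : quat R) (e : R) : 0 < e ->
  exists d : R, 0 < d /\ forall p, qnorm (qsub p q) < d -> nv ((Rq v p : VT) - (Rq v q : VT)) < e.
Proof.
move=> e0.
set Q := qnorm q; set K := 2 * nv v + 8 * Q + 4.
have Q0 : 0 <= Q := qnorm_ge0 q.
have nv0' : 0 <= nv v := nv_ge0 v.
have K0 : 0 < K by rewrite /K; lra.
set dl := e / (K + e).
have hdl : dl * (K + e) = e by rewrite /dl mulfVK // gt_eqF //; lra.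
have dl0 : 0 < dl by rewrite /dl divr_gt0 //; lra.
exists dl; split => // p Hp.
rewrite Rq_diff; apply: (le_lt_trans (nvD _ _)); rewrite !nvL nv1 mulr1.
set d := qnorm (qsub p q) in Hp *.
have [c0 c1 c2 c3] := qcomp (qsub p q).
have [b0 b1 b2 b3] := qcomp q.
rewrite -/d /= in c0 c1 c2 c3; rewrite -/Q in b0 b1 b2 b3.
have E1 := sqdiff c0 b0; have E2 := sqdiff c1 b1; have E3 := sqdiff c2 b2; have E4 := sqdiff c3 b3.
have H1 : `|2 * Req q - 2 * Req p| <= 2 * d.
  move: c0; rewrite /Req !ler_norml => /andP[h1 h2]; apply/andP; split; lra.
have H2 : `|qnorm p ^+ 2 - qnorm q ^+ 2| <= 4 * (d * (2 * Q + d)).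
  rewrite !qnorm_sq ler_norml.
  move: E1 E2 E3 E4 => /andP[e1 e2] /andP[e3 e4] /andP[e5 e6] /andP[e7 e8].
  apply/andP; split; lra.
have d0 : 0 <= d := qnorm_ge0 _.
have dK : d * K < e by nra.
have d1 : d < 1 by nra.
have : `|2 * Req q - 2 * Req p| * nv v <= 2 * d * nv v by apply: ler_wpM2r.
rewrite /K in dK; nra.
Qed.
End S.

Theorem mainTheorem7 (R : realType) (V : QBA R) (v : V) :
  (forall q : quat R, boundaryH (sigmaS v) q -> BSd v q) /\
  (forall q : quat R, BSd v q -> sigmaS v q).
Proof.
split.
- move=> q Hq e e0.
  have [d [d0 Hd]] := @Rq_cont R V v q e e0.
  have [[p1 [h1 s1]] [p2 [h2 s2]]] := Hq d d0.
  split.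
  + exists (Rq v p1); split; [exact: (Hd p1 h1) | exact: s1].
  + exists (Rq v p2); split; [exact: (Hd p2 h2) | exact: s2].
- move=> q Hq Hinv.
  have [d [d0 Hd]] := @inv_open R V (Rq v q) Hinv.
  have [[y [hy ny]] _] := Hq d d0.
  apply: ny; exact: (Hd y hy).
Qed.
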